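(* Let $q>2$ be a power of $2$ and let $U$ be an intersecting family of $q^2-\varepsilon$ polynomials over $\mathbb{F}_q$ of degree at most $2$, where $\varepsilon<\frac{q\sqrt{q}}{4}-\frac{q}{8}-\frac{\sqrt{q}}{8}$. Then the graphs of the polynomials in $U$ share a common point.
   Context: The graph of $f\colon\mathbb{F}_q\to\mathbb{F}_q$ is $\{(x,f(x)):x\in\mathbb{F}_q\}$. A set of polynomials over $\mathbb{F}_q$ is intersecting if the graphs of any two of its members share at least one point. *)

(* Defs.v *)
From HB Require Import structures.
From mathcomp Require Import all_boot all_order all_algebra all_field.
Set Implicit Arguments. Unset Strict Implicit. Unset Printing Implicit Defensive.
Import Order.TTheory GRing.Theory Num.Theory.
Local Open Scope ring_scope.

Definition graphs_meet (F : finFieldType) (f g : {poly F}) : Prop :=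
  exists x : F, f.[x] = g.[x].

Definition intersecting (F : finFieldType) (U : seq {poly F}) : Prop :=
  forall f g, f \in U -> g \in U -> graphs_meet f g.

Definition common_point (F : finFieldType) (U : seq {poly F}) : Prop :=
  exists x y : F, forall f, f \in U -> f.[x] = y.

(* Main.v *)
Require Import Defs.
From HB Require Import structures.
From mathcomp Require Import all_boot all_order all_algebra all_field.
From mathcomp Require Import ring zify.
Set Implicit Arguments. Unset Strict Implicit. Unset Printing Implicit Defensive.
Import Order.TTheory GRing.Theory Num.Theory.
Local Open Scope ring_scope.

Section Gen.
Variable F : finFieldType.

Lemma meet_card (A B : {set F}) : (#|A| + #|B| <= #|A :&: B| + #|F|)%N.
Proof. rewrite -cardsUI addnC leq_add2l; exact: max_card. Qed.

Lemma meet (A B : {set F}) : (#|F| < #|A| + #|B|)%N -> exists x, x \in A /\ x \in B.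
Proof.
move=> h; have hm := meet_card A B; have: (0 < #|A :&: B|)%N by lia.
by case/card_gt0P => x; rewrite inE => /andP[]; exists x.
Qed.

Lemma card_shift (A : {set F}) (u : F) : #|[set a + u | a in A]| = #|A|.
Proof. by apply: card_imset => x y /addIr. Qed.

Lemma card_shiftl (A : {set F}) (u : F) : #|[set u - a | a in A]| = #|A|.
Proof. apply: card_imset => x y /= h; by apply: oppr_inj; apply: (addrI u). Qed.

Lemma sum_rep (A : {set F}) : (#|F| < 2 * #|A|)%N ->
  forall u, exists a1 a2, [/\ a1 \in A, a2 \in A & u = a1 - a2].
Proof.
move=> h u; have [x [xA /imsetP[a aA xe]]] : exists x, x \in A /\ x \in [set a + u | a in A].
  by apply: meet; rewrite card_shift; lia.
by exists x, a; split => //; rewrite xe addrC addKr.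
Qed.

Lemma bigset_all (A : {set F}) : (forall x y, x \in A -> y \in A -> x + y \in A) ->
  (#|F| < 2 * #|A|)%N -> forall x, x \in A.
Proof.
move=> cl h x; have [a1 [xA /imsetP[a aA xe]]] : exists y, y \in A /\ y \in [set x - a | a in A].
  by apply: meet; rewrite card_shiftl; lia.
have -> : x = (x - a) + a by rewrite subrK.
by apply: cl; rewrite // -xe.
Qed.

Definition badd (phi : F -> bool) := forall x y, phi (x + y) = phi x (+) phi y.

Lemma badd_ker phi : badd phi -> (#|F| <= 2 * #|[set y | ~~ phi y]|)%N.
Proof.
move=> ha.
have hc : (#|[set y | phi y]| + #|[set y | ~~ phi y]| = #|F|)%N.
  rewrite -cardsUI.
  have -> : [set y | phi y] :|: [set y | ~~ phi y] = setT.
    by apply/setP => y; rewrite !inE; case: (phi y).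
  have -> : [set y | phi y] :&: [set y | ~~ phi y] = set0.
    by apply/setP => y; rewrite !inE; case: (phi y).
  by rewrite cards0 addn0 cardsT.
case: (boolP [exists y, phi y]) => [/existsP[y0 py0]|].
  have : (#|[set y | phi y]| <= #|[set y | ~~ phi y]|)%N.
    rewrite -(card_shift _ y0); apply: subset_leq_card; apply/subsetP => z /imsetP[y].
    by rewrite !inE => py ->; rewrite ha py py0.
  lia.
move=> /existsPn hn.
have e : [set y | phi y] = set0 by apply/setP => y; rewrite !inE (negbTE (hn y)).
rewrite e cards0 add0n in hc; rewrite -[X in (X <= _)%N]hc; lia.
Qed.

Lemma badd_big phi (A : {set F}) : badd phi -> (#|F| < 2 * #|A|)%N ->
  (forall x, x \in A -> ~~ phi x) -> forall x, ~~ phi x.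
Proof.
move=> ha hA hz x.
suff : x \in [set y | ~~ phi y] by rewrite inE.
apply: bigset_all.
- by move=> y z; rewrite !inE ha => /negbTE -> /negbTE ->.
- apply: (leq_trans hA); rewrite leq_mul2l /=; apply: subset_leq_card.
  by apply/subsetP => y /hz; rewrite inE.
Qed.

End Gen.

Section Char2.
Variable F : finFieldType.
Hypothesis F2 : 2 \in [pchar F].

Lemma two0 : (2 : F) = 0. Proof. exact: pcharf0 F2. Qed.
Lemma oppF (x : F) : - x = x. Proof. exact: oppr_pchar2. Qed.
Lemma addxx (x : F) : x + x = 0. Proof. exact: addrr_pchar2. Qed.
Lemma subF (x y : F) : x - y = x + y. Proof. by rewrite oppF. Qed.

Lemma sqrD (x y : F) : (x + y) ^+ 2 = x ^+ 2 + y ^+ 2.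
Proof. by rewrite sqrrD mulr2n addxx addr0. Qed.

Lemma sqr_inj (x y : F) : x ^+ 2 = y ^+ 2 -> x = y.
Proof.
move=> h; have : (x + y) ^+ 2 = 0 by rewrite sqrD h addxx.
move/eqP; rewrite expf_eq0 /= => /eqP e.
have -> : y = (x + y) + x by ring: two0.
by rewrite e add0r.
Qed.

Lemma sqr_surj (k : F) : exists v, v ^+ 2 = k.
Proof.
have : k \in [set v ^+ 2 | v in F].
  have -> : [set v ^+ 2 | v in F] = setT.
    apply/eqP; rewrite eqEcard subsetT cardsT card_imset //=.
    by move=> x y; apply: sqr_inj.
  by rewrite inE.
by case/imsetP => v _ ->; exists v.
Qed.

Definition AS (y : F) := y ^+ 2 + y.
Definition HS := [set AS y | y in F].
Definition T (x : F) := x \notin HS.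

Lemma ASD x y : AS (x + y) = AS x + AS y.
Proof. rewrite /AS sqrD; ring. Qed.

Lemma HS_add x y : x \in HS -> y \in HS -> x + y \in HS.
Proof.
by move=> /imsetP[a _ ->] /imsetP[b _ ->]; rewrite -ASD; apply: imset_f.
Qed.

Lemma AS_eq y z : AS y = AS z -> z = y \/ z = y + 1.
Proof.
move=> h.
have h0 : AS (y + z) = 0 by rewrite ASD h addxx.
have : (y + z) * (y + z + 1) = 0 by rewrite -h0 /AS; ring.
move/eqP; rewrite mulf_eq0 => /orP[] /eqP e.
  left; have -> : z = (y + z) + y by ring: two0.
  by rewrite e add0r.
right; have -> : z = (y + z + 1) + y + 1 by ring: two0.
by rewrite e add0r.
Qed.


Lemma card_HS : (#|F| <= 2 * #|HS|)%N.
Proof.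
pose bit (y : F) := (enum_rank y < enum_rank (y + 1)%R)%N.
pose f (y : F) := (AS y, bit y).
have finj : injective f.
  move=> y z [] /AS_eq [] // -> hb.
  have e : y + 1 + 1 = y by ring: two0.
  rewrite /bit e in hb.
  have : enum_rank y = enum_rank (y + 1).
    move: hb; case: ltngtP => [//|//|er _]; exact: val_inj.
  move/enum_rank_inj => h.
  have : (1 : F) = 0 by rewrite -[1](addKr y) -h addNr.
  by move/eqP; rewrite oner_eq0.
have : (#|[set f y | y in F]| <= #|setX HS [set: bool]|)%N.
  apply: subset_leq_card; apply/subsetP => p /imsetP[y _ ->].
  by rewrite !inE /= imset_f.
by rewrite card_imset // cardsX cardsT card_bool mulnC.
Qed.

Lemma HS_index x y : x \notin HS -> y \notin HS -> x + y \in HS.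
Proof.
move=> hx hy.
pose xH := [set x + h | h in HS].
have disj : HS :&: xH = set0.
  apply/setP => z; rewrite !inE; apply/negP => /andP[zH /imsetP[h hH ez]].
  have : x = z + h by rewrite ez; ring: two0.
  by move=> ex; move: hx; rewrite ex HS_add.
have cx : #|xH| = #|HS| by apply: card_imset => a b /addrI.
have full : HS :|: xH = setT.
  apply/eqP; rewrite eqEcard subsetT cardsT.
  have := cardsUI HS xH; rewrite disj cards0 addn0 cx => ->.
  by rewrite addnn -mul2n card_HS.
have : y \in HS :|: xH by rewrite full inE.
rewrite inE (negbTE hy) /= => /imsetP[h hH ->].
by rewrite addrA addxx add0r.
Qed.

Lemma TD x y : T (x + y) = T x (+) T y.
Proof.
rewrite /T; case hx: (x \in HS); case hy: (y \in HS) => /=.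
- by rewrite HS_add.
- apply/negP => hxy; move/negP: hy; apply; have -> : y = (x + y) + x by ring: two0.
  exact: HS_add.
- apply/negP => hxy; move/negP: hx; apply; have -> : x = (x + y) + y by ring: two0.
  exact: HS_add.
- by rewrite HS_index ?hx ?hy.
Qed.

Lemma T0 : T 0 = false.
Proof. rewrite /T; apply/negbF/imsetP; exists 0 => //; by rewrite /AS expr0n addr0. Qed.

Lemma TN x : T (- x) = T x. Proof. by rewrite oppF. Qed.
Lemma TB x y : T (x - y) = T x (+) T y. Proof. by rewrite TD TN. Qed.

Lemma T_AS y : T (AS y) = false.
Proof. by rewrite /T imset_f. Qed.

Lemma T_sqr x : T (x ^+ 2) = T x.
Proof.
have -> : x ^+ 2 = AS x + x by rewrite /AS; ring: two0.
by rewrite TD T_AS.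
Qed.

Lemma T_ex : exists z, T z.
Proof.
case: (boolP [exists z, T z]) => [/existsP[z hz]|/existsPn hn]; first by exists z.
have hs : HS = setT by apply/setP => z; rewrite inE; move: (hn z); rewrite /T negbK.
have inj : injective AS.
  have : #|[set AS y | y in F]| == #|F| by rewrite -/HS hs cardsT.
  by move/imset_injP => h x y e; apply: h.
have : AS 0 = AS 1 by rewrite /AS expr1n expr0n /= addr0 addxx.
move/inj/eqP; by rewrite eq_sym oner_eq0.
Qed.

Lemma nondeg x : (forall w, ~~ T (w * x)) -> x = 0.
Proof.
move=> h; apply/eqP; apply/negPn/negP => hx.
have [z hz] := T_ex.
by move: (h (z / x)); rewrite mulfVK // hz.
Qed.

Lemma Tbadd (x : F) : badd (fun w => T (w * x)).
Proof. by move=> a b; rewrite mulrDl TD. Qed.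

End Char2.

Section Core.
Variable F : finFieldType.
Hypothesis F2 : 2 \in [pchar F].
Variables (S : {set F * F}) (c : F -> F -> F).
Hypothesis Hc : forall a b a' b', (a, b) \in S -> (a', b') \in S -> b != b' ->
  ~~ T ((a - a') * (c a b - c a' b') / (b - b') ^+ 2).
Definition Row b := [set a | (a, b) \in S].
Variable b0 : F.
Hypothesis Hb0 : (3 * #|F| < 4 * #|Row b0|)%N.
Definition good := [set b | (#|F| < 2 * #|Row b|)%N].
Hypothesis Hgood : (#|F| < 2 * #|good|)%N.
Variable b1 : F.
Hypotheses (Hb1 : b1 \in good) (Hb10 : b1 != b0).

Local Notation R := (Row b0).
Local Notation g a := (c a b0).
Definition lam b := ((b0 - b) ^+ 2)^-1.

Lemma lam_neq0 b : b != b0 -> lam b != 0.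
Proof. by move=> h; rewrite /lam invr_eq0 expf_eq0 /= subr_eq0 eq_sym. Qed.

Lemma HcR b a a' : b != b0 -> a \in R -> a' \in Row b ->
  ~~ T (lam b * ((a - a') * (g a - c a' b))).
Proof.
move=> hb; rewrite !inE => ha ha'.
by have := Hc ha ha'; rewrite eq_sym hb mulrC => /(_ isT).
Qed.

Lemma four_pt (l a1 a2 a1' a2' g1 g2 h1 h2 : F) :
  ~~ T (l * ((a1 - a1') * (g1 - h1))) -> ~~ T (l * ((a1 - a2') * (g1 - h2))) ->
  ~~ T (l * ((a2 - a1') * (g2 - h1))) -> ~~ T (l * ((a2 - a2') * (g2 - h2))) ->
  T (l * (a1 - a2) * (h1 - h2)) = T (l * (a1' - a2') * (g1 - g2)).
Proof.
move=> /negbTE e1 /negbTE e2 /negbTE e3 /negbTE e4.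
have -> : l * (a1 - a2) * (h1 - h2) =
  - (l * ((a1 - a1') * (g1 - h1)) - l * ((a1 - a2') * (g1 - h2))
     - l * ((a2 - a1') * (g2 - h1)) + l * ((a2 - a2') * (g2 - h2)))
  - l * (a1' - a2') * (g1 - g2) by ring.
rewrite (TB F2) (TN F2) (TD F2) !(TB F2) e1 e2 e3 e4.
by case: (T _).
Qed.

Lemma III b a1 a2 a1' a2' : b != b0 -> a1 \in R -> a2 \in R -> a1' \in Row b -> a2' \in Row b ->
  T (lam b * (a1 - a2) * (c a1' b - c a2' b)) = T (lam b * (a1' - a2') * (g a1 - g a2)).
Proof. by move=> hb h1 h2 h1' h2'; apply: four_pt; apply: HcR. Qed.

Lemma Rb1 : (#|F| < 2 * #|Row b1|)%N.
Proof. by move: Hb1; rewrite inE. Qed.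

Lemma R2 : (#|F| < 2 * #|R|)%N.
Proof. lia. Qed.

Lemma WD a1 a2 a3 a4 : a1 \in R -> a2 \in R -> a3 \in R -> a4 \in R -> a1 - a2 = a3 - a4 ->
  g a1 - g a2 = g a3 - g a4.
Proof.
move=> h1 h2 h3 h4 e.
apply/eqP; rewrite -subr_eq0; apply/eqP; apply: (nondeg F2) => w.
have [a1' [a2' [h1' h2' ew]]] := sum_rep Rb1 (w / lam b1).
have l0 := lam_neq0 Hb10.
have ew' : lam b1 * (a1' - a2') = w by rewrite -ew mulrC divfK.
have := III Hb10 h1 h2 h1' h2'; rewrite e (III Hb10 h3 h4 h1' h2') ew' => e'.
by rewrite mulrBr (TB F2) e' addbb.
Qed.

Definition L (u : F) : F :=
  if [pick p : F * F | (p.1 \in R) && (p.2 \in R) && (p.1 - p.2 == u)] is Some p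
  then g p.1 - g p.2 else 0.

Lemma LE a1 a2 : a1 \in R -> a2 \in R -> L (a1 - a2) = g a1 - g a2.
Proof.
move=> h1 h2; rewrite /L; case: pickP => [[x y] /= /andP[/andP[hx hy] /eqP e]|hn].
  exact: WD.
by move: (hn (a1, a2)); rewrite /= h1 h2 eqxx.
Qed.

Lemma LD u v : L (u + v) = L u + L v.
Proof.
have hm := meet_card R [set a + (- u) | a in R].
rewrite card_shift in hm.
have [x [/setIP[xR /imsetP[a aR xa]] /imsetP[a' a'R xa']]] :
    exists x, x \in R :&: [set a + (- u) | a in R] /\ x \in [set a + v | a in R].
  apply: meet; rewrite card_shift; lia.
have -> : u + v = a - a' by rewrite -[a](subrK u) -xa xa'; ring.
rewrite LE //.
have -> : u = a - x by rewrite xa; ring.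
have -> : v = x - a' by rewrite xa'; ring.
rewrite !LE //; ring.
Qed.

Lemma L0 : L 0 = 0.
Proof. by have := LD 0 0; rewrite addr0 => h; apply: (addrI (L 0)); rewrite -h addr0. Qed.

Lemma LN u : L (- u) = - L u.
Proof. by have := LD u (- u); rewrite subrr L0 => /esym/eqP; rewrite addr_eq0 => /eqP ->; rewrite opprK. Qed.

Lemma LB u v : L (u - v) = L u - L v.
Proof. by rewrite LD LN. Qed.

Definition a0 := odflt 0 [pick a in R].

Lemma a0R : a0 \in R.
Proof.
rewrite /a0; case: pickP => //= hn.
have : (0 < #|R|)%N by lia.
by case/card_gt0P => x; rewrite (hn x).
Qed.

Definition g0 := g a0 - L a0.

Lemma g_aff a : a \in R -> g a = L a + g0.
Proof. by move=> ha; have := LE ha a0R; rewrite LB /g0 => e; rewrite -[g a](subrK (g a0)) -e; ring. Qed.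


Lemma LA : badd (fun x => T (L x)) -> True. Proof. by []. Qed.

Section SymB.
Variable b : F.
Hypotheses (Hb : b \in good) (Hbb : b != b0).
Local Notation l := (lam b).
Local Notation h a := (c a b).

Lemma Rb : (#|F| < 2 * #|Row b|)%N.
Proof. by move: Hb; rewrite inE. Qed.

Definition ap0 := odflt 0 [pick a in Row b].

Lemma ap0R : ap0 \in Row b.
Proof.
rewrite /ap0; case: pickP => //= hn.
have : (0 < #|Row b|)%N by have := Rb; lia.
by case/card_gt0P => x; rewrite (hn x).
Qed.

Lemma III' u a' : a' \in Row b -> T (l * u * (h a' - h ap0)) = T (l * (a' - ap0) * L u).
Proof.
move=> ha'; have [a1 [a2 [h1 h2 ->]]] := sum_rep R2 u.
by rewrite (III Hbb h1 h2 ha' ap0R) LE.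
Qed.

Definition ell a := T (l * a * g0) (+) T (l * ap0 * L a) (+) T (l * a * h ap0).
Definition Q a := T (l * a * L a) (+) ell a.
Definition P a' := T (l * a' * g0) (+) T (l * a' * h a').
Definition B x y := T (l * x * L y) (+) T (l * y * L x).

Lemma QP a a' : a \in R -> a' \in Row b -> Q a = P a'.
Proof.
move=> ha ha'.
have := HcR Hbb ha ha'; rewrite (g_aff ha).
have -> : l * ((a - a') * (L a + g0 - h a')) =
   l * a * L a + l * a * g0 - l * a * (h a' - h ap0) - l * a * h ap0
   - (l * a' * L a) - l * a' * g0 + l * a' * h a' by ring.
rewrite !(TD F2) !(TN F2) (III' a ha').
have -> : l * (a' - ap0) * L a = l * a' * L a - l * ap0 * L a by ring.
rewrite (TB F2) /Q /ell /P.
by do ! case: (T _).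
Qed.

Lemma Qadd x y : Q (x + y) = Q x (+) Q y (+) B x y.
Proof.
rewrite /Q /ell /B !LD.
have -> : l * (x + y) * (L x + L y) = l * x * L x + l * y * L y + (l * x * L y + l * y * L x) by ring.
rewrite [l * (x + y)]mulrDr [(l * x + l * y) * g0]mulrDl.
rewrite [l * ap0 * (L x + L y)]mulrDr [(l * x + l * y) * h ap0]mulrDl.
rewrite !(TD F2).
by do ! case: (T _).
Qed.

Lemma Q0 : Q 0 = false.
Proof. by rewrite /Q /ell L0 !mulr0 !mul0r !T0. Qed.

Lemma Bbadd x : badd (B x).
Proof.
move=> y z; rewrite /B LD [l * x * _]mulrDr [l * (y + z)]mulrDr mulrDl !(TD F2).
by do ! case: (T _).
Qed.

Lemma Qall x : Q x = false.
Proof.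
have hk := badd_ker (Bbadd x).
have hm := meet_card R [set a + (- x) | a in R].
rewrite card_shift in hm.
have [y [hy /setIP[yR /imsetP[a aR ya]]]] :
    exists y, y \in [set y | ~~ B x y] /\ y \in R :&: [set a + (- x) | a in R].
  apply: meet; lia.
move: hy; rewrite inE => /negbTE hy.
have := Qadd x y; rewrite hy.
have -> : x + y = a by rewrite ya; ring.
rewrite (QP aR ap0R) (QP yR ap0R).
by case: (Q x); case: (P _).
Qed.

Lemma Sym x y : T (l * x * L y) = T (l * y * L x).
Proof.
have := Qadd x y; rewrite !Qall /B.
by case: (T _); case: (T _).
Qed.

End SymB.


Definition mu b := lam b / lam b1.
Definition C := [set m | [forall y, L (m * y) == m * L y]].

Lemma Cadd m n : m \in C -> n \in C -> m + n \in C.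
Proof.
rewrite !inE => /forallP hm /forallP hn; apply/forallP => y.
by rewrite mulrDl LD (eqP (hm y)) (eqP (hn y)) mulrDl.
Qed.

Lemma Cmu b : b \in good -> b != b0 -> mu b \in C.
Proof.
move=> hb hbb; rewrite inE; apply/forallP => y.
rewrite -subr_eq0; apply/eqP; apply: (nondeg F2) => w.
have l1 := lam_neq0 Hb10.
pose x := w / lam b1.
have ex : w = lam b1 * x by rewrite /x mulrC divfK.
rewrite mulrBr (TB F2) ex (Sym Hb1 Hb10 x).
have -> : lam b1 * (mu b * y) = lam b * y by rewrite /mu mulrA [lam b1 * _]mulrC divfK.
rewrite -(Sym hb hbb).
have -> : lam b1 * x * (mu b * L y) = lam b * x * L y.
  by rewrite /mu; field.
by rewrite addbb.
Qed.

Lemma lam_inj : injective lam.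
Proof.
move=> x y /invr_inj /(sqr_inj F2) /eqP; rewrite -subr_eq0.
have -> : b0 - x - (b0 - y) = y - x by ring.
by rewrite subr_eq0 => /eqP.
Qed.

Lemma Call m : m \in C.
Proof.
apply: bigset_all; first exact: Cadd.
pose M := [set mu b | b in good :\ b0].
have l1 := lam_neq0 Hb10.
have cM : #|M| = #|good :\ b0|.
  apply: card_imset => x y; rewrite /mu => e.
  apply: lam_inj; apply: (mulIf (invr_neq0 l1)); exact: e.
have n0 : 0 \notin M.
  apply/imsetP => -[b]; rewrite !inE => /andP[hb0 _] e.
  by move: (mulf_neq0 (lam_neq0 hb0) (invr_neq0 l1)); rewrite -/(mu b) -e eqxx.
have sub : 0 |: M \subset C.
  apply/subsetP => z; rewrite !inE => /orP[/eqP ->|/imsetP[b]].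
    by apply/forallP => y; rewrite !mul0r L0.
  rewrite in_setD1 => /andP[hb0 hb] ->.
  by have := Cmu hb hb0; rewrite inE.
have := subset_leq_card sub.
rewrite cardsU1 n0 cM.
have := cardsD1 b0 good.
move: Hgood; case: (b0 \in good) => /=; set kC := #|C|; lia.
Qed.

Lemma Lmul y : L y = y * L 1.
Proof. by have := Call y; rewrite inE => /forallP /(_ 1) /eqP; rewrite mulr1. Qed.

Theorem core : exists v y0, forall a b, (a, b) \in S -> c a b = v ^+ 2 * a + v * b + y0.
Proof.
have [v hv] := sqr_surj F2 (L 1).
exists v, (g0 - v * b0).
have row0 a : a \in R -> g a = v ^+ 2 * a + v * b0 + (g0 - v * b0).
  by move=> ha; rewrite (g_aff ha) Lmul hv; ring.
move=> a b hab.
case: (eqVneq b b0) => [eb|hbb].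
  by rewrite eb row0 // inE -eb.
apply/eqP; rewrite -subr_eq0; apply/eqP.
set e := c a b - _.
have be : b - b0 != 0 by rewrite subr_eq0.
suff : e / (b - b0) ^+ 2 = 0.
  by move/eqP; rewrite mulf_eq0 invr_eq0 expf_eq0 /= (negbTE be) orbF => /eqP.
apply: (nondeg F2) => w.
have hA : (#|F| < 2 * #|[set (a - a')%R | a' in R]|)%N by rewrite card_shiftl; exact: R2.
move: w; apply: (badd_big (Tbadd F2 _) hA) => w /imsetP[a' ha' ->].
have ha'S : (a', b0) \in S by move: ha'; rewrite inE.
have := Hc hab ha'S hbb.
rewrite row0 //.
have -> : (a - a') * (c a b - (v ^+ 2 * a' + v * b0 + (g0 - v * b0))) / (b - b0) ^+ 2
   = (a - a') * (e / (b - b0) ^+ 2) + AS (v * (a - a') / (b - b0)).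
  by rewrite /e /AS; field.
by rewrite (TD F2) T_AS addbF.
Qed.

End Core.

Lemma alg_bound (q N : nat) : ((q ^ 2)%:Z - (N)%:Z)%:~R
    < (q%:R * sqrtC q%:R / 4 - q%:R / 8 - sqrtC q%:R / 8 : algC) ->
  (3 * q ^ 2 < 4 * N)%N.
Proof.
set s := sqrtC q%:R.
have s0 : 0 <= s by rewrite sqrtC_ge0 ler0n.
have sq : s <= q%:R.
  rewrite -[X in _ <= X](@sqrCK _ q%:R) ?ler0n //.
  rewrite /s ler_sqrtC ?qualifE /= ?ler0n ?exprn_ge0 //.
  by rewrite -natrX ler_nat; case: q {s s0} => // n; rewrite expnS leq_pmulr // expn_gt0.
set m := ((q ^ 2)%:Z - (N)%:Z).
move=> h.
have h1 : q%:R * s / 4 - q%:R / 8 - s / 8 <= q%:R * q%:R / (4 : algC).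
  apply: le_trans (_ : q%:R * s / 4 <= _).
    by rewrite -addrA -opprD lerBlDr lerDl addr_ge0 // divr_ge0 // ?ler0n.
  by rewrite ler_wpM2r ?invr_ge0 ?ler0n // ler_wpM2l ?ler0n.
have h2 := lt_le_trans h h1.
rewrite ltr_pdivlMr ?ltr0n // in h2.
have h3 : ((m * 4)%:~R : algC) < ((q * q)%N%:Z)%:~R by rewrite intrM -pmulrn natrM.
rewrite ltr_int /m in h3.
lia.
Qed.

Lemma evalU (F : finFieldType) (f : {poly F}) x : (size f <= 3)%N ->
  f.[x] = f`_0 + f`_1 * x + f`_2 * x ^+ 2.
Proof.
move=> h; rewrite (horner_coef_wide x h) !big_ord_recl big_ord0 /=.
by rewrite /bump /= expr0 mulr1 expr1 addr0 addrA.
Qed.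

Lemma card_sum (T : finType) (A : {set T}) : #|A| = (\sum_x (x \in A : nat))%N.
Proof. by rewrite -sum1_card big_mkcond /=; apply: eq_bigr => x _; case: (x \in A). Qed.

Lemma row_sum (F : finFieldType) (S : {set F * F}) : (\sum_b #|Row S b|)%N = #|S|.
Proof.
transitivity (\sum_a \sum_b ((a, b) \in S : nat))%N.
  rewrite exchange_big /=; apply: eq_bigr => b _.
  by rewrite card_sum; apply: eq_bigr => a _; rewrite inE.
by rewrite pair_big card_sum; apply: eq_bigr => -[a b] _.
Qed.

Lemma counting (F : finFieldType) (S : {set F * F}) :
  (3 * #|F| ^ 2 < 4 * #|S|)%N ->
  (exists b0, (3 * #|F| < 4 * #|Row S b0|)%N) /\ (#|F| < 2 * #|good S|)%N.
Proof.
move=> h; rewrite -row_sum in h.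
set q := #|F| in h *.
have rq b : (#|Row S b| <= q)%N by apply: max_card.
split.
  apply/existsP; rewrite -[X in is_true X]negbK; apply/negP => /existsPn hn.
  have : (4 * \sum_b #|Row S b| <= \sum_(b : F) 3 * q)%N.
    rewrite big_distrr /=; apply: leq_sum => b _.
    by move: (hn b); rewrite -leqNgt.
  rewrite sum_nat_const [#|xpredT|](_ : _ = q) //; lia.
have : (\sum_b 2 * #|Row S b| <= \sum_(b : F) (q + q * (b \in good S)))%N.
  apply: leq_sum => b _; case hb: (b \in good S) => /=.
    rewrite muln1 addnn -mul2n leq_mul2l; apply/orP; right; exact: rq.
  by move: hb; rewrite inE => /negbT; rewrite -leqNgt muln0 addn0.
have e : (\sum_(b : F) (q + q * (b \in good S)) = q * q + q * #|good S|)%N.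
  rewrite big_split /= sum_nat_const [#|xpredT|](_ : _ = q) // mulnC; congr (_ + _).
  by rewrite -big_distrr /= card_sum mulnC.
rewrite e -big_distrr /=.
move=> h2.
case: (ltnP q (2 * #|good S|)) => // h3.
have : (q * (2 * #|good S|) <= q * q)%N by rewrite leq_mul2l h3 orbT.
move: h h2; rewrite expnS expn1; set N := (\sum_i #|Row S i|)%N; set g := #|good S|; nia.
Qed.

Lemma root_T (F : finFieldType) (F2 : 2 \in [pchar F]) (a b c a' b' c' x : F) :
  b != b' -> c + b * x + a * x ^+ 2 = c' + b' * x + a' * x ^+ 2 ->
  ~~ T ((a - a') * (c - c') / (b - b') ^+ 2).
Proof.
move=> hb e.
have hb' : b - b' != 0 by rewrite subr_eq0.
have hg : c - c' = - ((a - a') * x ^+ 2 + (b - b') * x).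
  apply/eqP; rewrite -subr_eq0 opprK; apply/eqP.
  have -> : c - c' + ((a - a') * x ^+ 2 + (b - b') * x)
     = (c + b * x + a * x ^+ 2) - (c' + b' * x + a' * x ^+ 2) by ring.
  by rewrite e subrr.
rewrite hg.
have -> : (a - a') * - ((a - a') * x ^+ 2 + (b - b') * x) / (b - b') ^+ 2
   = - AS ((a - a') * x / (b - b')).
  by rewrite /AS; field.
by rewrite (TN F2) T_AS.
Qed.

Unset Implicit Arguments.
Theorem theorem5 (F : finFieldType) (q : nat) (U : seq {poly F}) :
  (exists k : nat, q = (2 ^ k)%N) -> (2 < q)%N -> #|F| = q ->
  uniq U -> (forall f, f \in U -> (size f <= 3)%N) ->
  intersecting U ->
  ((q ^ 2)%:Z - (size U)%:Z)%:~R
    < (q%:R * sqrtC q%:R / 4 - q%:R / 8 - sqrtC q%:R / 8 : algC) ->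
  common_point U.
Proof.
move=> [k hk] hq2 hF huniq hsz hint hineq.
have F2 : 2 \in [pchar F] by apply: (@card_finPcharP F 2 k) => //; rewrite hF hk.
have hN := alg_bound hineq.
pose key (f : {poly F}) := (f`_2, f`_1).
have samec f g : f \in U -> g \in U -> f`_2 = g`_2 -> f`_1 = g`_1 -> f`_0 = g`_0.
  move=> hf hg e2 e1; have [x ex] := hint f g hf hg.
  move: ex; rewrite !evalU ?hsz // e2 e1 => /addIr /addIr.
  done.
have keyinj : {in U &, injective key}.
  move=> f g hf hg [e2 e1]; have e0 := samec f g hf hg e2 e1.
  apply/polyP => i; case: i => [//|[//|[//|i]]].
  rewrite !nth_default //; apply: leq_trans (hsz _ _) _ => //.
pose S := [set p | p \in map key U].
have cardS : #|S| = size U.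
  rewrite cardsE; have /card_uniqP -> : uniq (map key U) by rewrite map_inj_in_uniq.
  by rewrite size_map.
pose c (a b : F) := (nth 0 U (find (fun f => key f == (a, b)) U))`_0.
have ckey f : f \in U -> c f`_2 f`_1 = f`_0.
  move=> hf; rewrite /c.
  have hh : has (fun g => key g == (f`_2, f`_1)) U by apply/hasP; exists f.
  have hin : nth 0 U (find (fun g => key g == (f`_2, f`_1)) U) \in U.
    by apply: mem_nth; rewrite -has_find.
  have := nth_find 0 hh; rewrite /key => /eqP [e2 e1].
  exact: samec.
have Hc : forall a b a' b', (a, b) \in S -> (a', b') \in S -> b != b' ->
    ~~ T ((a - a') * (c a b - c a' b') / (b - b') ^+ 2).
  move=> a b a' b'; rewrite !inE => /mapP[f hf [ea eb]] /mapP[g hg [ea' eb']] hbb.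
  rewrite ea eb ea' eb' !ckey //.
  have [x ex] := hint f g hf hg; rewrite !evalU ?hsz // in ex.
  by apply: (root_T F2 _ ex); rewrite -eb -eb'.
have hS : (3 * #|F| ^ 2 < 4 * #|S|)%N by rewrite cardS hF.
have [[b0 Hb0] Hgood] := counting hS.
have [b1 [Hb1 Hb10]] : exists b1, b1 \in good S /\ b1 != b0.
  have hd := cardsD1 b0 (good S).
  have : (0 < #|good S :\ b0|)%N.
    move: Hgood hd; rewrite hF; case: (b0 \in good S) => /=; lia.
  by case/card_gt0P => b1; rewrite in_setD1 => /andP[h1 h2]; exists b1.
have [v [y0 hv]] := core F2 Hc Hb0 Hgood Hb1 Hb10.
exists v, y0 => f hf.
rewrite evalU ?hsz // -(ckey f hf) hv; last by rewrite inE; apply: map_f.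
ring: (two0 F2).
Qed.
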